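(* Let $A$ be a finite alphabet. Every infinite LSP word over $A$ is $S_{\rm bLSP}(A)$-adic.
   Context: A finite word $u$ is a left special factor of a word $w$ if there are distinct letters $x\neq y$ with $xu$ and $yu$ factors of $w$. A word is LSP if every left special factor of it is a prefix of it. A bLSP morphism on $A$ is an endomorphism $f$ of $A^*$ such that there is a letter $\alpha$ with $f(\alpha)=\alpha$ and, for every letter $\beta\neq\alpha$, there is a letter $\gamma$ with $f(\beta)=f(\gamma)\beta$; $S_{\rm bLSP}(A)$ is the set of all such morphisms. For a set $S$ of morphisms, an infinite word $\mathbf{w}$ is $S$-adic if there exist $(f_n)_{n\ge1}$ in $S$ and infinite words $(\mathbf{w}_n)_{n\ge1}$ with $\mathbf{w}_1=\mathbf{w}$ and $\mathbf{w}_n=f_n(\mathbf{w}_{n+1})$ for all $n\ge1$. *)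

(* Defs.v *)
From mathcomp Require Import all_boot.
Set Implicit Arguments. Unset Strict Implicit. Unset Printing Implicit Defensive.

Definition infword (A : Type) := nat -> A.

Definition pref (A : Type) (w : infword A) (n : nat) : seq A := mkseq w n.

Definition factor_inf (A : Type) (u : seq A) (w : infword A) : Prop :=
  exists i, mkseq (fun k => w (i + k)) (size u) = u.

Definition prefix_inf (A : Type) (u : seq A) (w : infword A) : Prop :=
  pref w (size u) = u.

Definition left_special (A : eqType) (u : seq A) (w : infword A) : Prop :=
  exists x y : A, x <> y /\ factor_inf (x :: u) w /\ factor_inf (y :: u) w.

Definition LSP (A : eqType) (w : infword A) : Prop :=
  forall u : seq A, left_special u w -> prefix_inf u w.

(* An endomorphism of A^* is determined by the images of the letters. *)
Definition morphism (A : Type) := A -> seq A.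

Definition morph_app (A : Type) (f : morphism A) (u : seq A) : seq A :=
  flatten (map f u).

(* [image_inf f w' w] : the image f(w') of the infinite word w' is the
   infinite word w, i.e. f(w') is infinite and w is its limit. *)
Definition image_inf (A : Type) (f : morphism A) (w' w : infword A) : Prop :=
  (forall n, prefix_inf (morph_app f (pref w' n)) w) /\
  (forall m, exists n, m <= size (morph_app f (pref w' n))).

Definition bLSP (A : eqType) (f : morphism A) : Prop :=
  exists alpha : A, f alpha = [:: alpha] /\
    forall beta : A, beta <> alpha ->
      exists gamma : A, f beta = rcons (f gamma) beta.

(* S-adic words (indices shifted to start at 0) *)
Definition S_adic (A : Type) (S : morphism A -> Prop) (w : infword A) : Prop :=
  exists (f : nat -> morphism A) (ws : nat -> infword A),
    (forall n, S (f n)) /\ ws 0 = w /\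
    (forall n, image_inf (f n) (ws n.+1) (ws n)).

(* Main.v *)
Require Import Defs.
From mathcomp Require Import all_boot.
From mathcomp Require Import zify.
From Stdlib Require Import ClassicalEpsilon.

Set Implicit Arguments. Unset Strict Implicit. Unset Printing Implicit Defensive.

Lemma mkseq_ext (T : Type) (g h : nat -> T) n :
  (forall k, k < n -> g k = h k) -> mkseq g n = mkseq h n.
Proof.
elim: n => [|n IH] E //.
rewrite !mkseqS IH ?E // => k Hk; apply: E; lia.
Qed.

Lemma mkseq_ext_inv (T : Type) (g h : nat -> T) n :
  mkseq g n = mkseq h n -> forall k, k < n -> g k = h k.
Proof.
move=> E k Hk.
by rewrite -(nth_mkseq (g 0) g Hk) E nth_mkseq.
Qed.

Lemma mkseq_add (T : Type) (g : nat -> T) a b :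
  mkseq g (a + b) = mkseq g a ++ mkseq (fun k => g (a + k)) b.
Proof.
elim: b => [|b IH]; first by rewrite addn0 cats0.
by rewrite addnS !mkseqS IH rcons_cat.
Qed.

Lemma mkseq_cons (T : Type) (g : nat -> T) n :
  mkseq g n.+1 = g 0 :: mkseq (fun k => g k.+1) n.
Proof. by rewrite -add1n mkseq_add. Qed.

Section Step.
Variables (A : finType) (w : nat -> A).
Hypothesis Hw : LSP w.

Notation al := (w 0).

Lemma pred_uniq i j : w i.+1 = w j.+1 -> w i.+1 <> al -> w i = w j.
Proof.
move=> E Ne; case: (eqVneq (w i) (w j)) => // D; exfalso.
have LS : left_special [:: w i.+1] w.
  exists (w i), (w j); split; first by apply/eqP.
  split.
  - exists i; by rewrite /mkseq /= addn0 addn1.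
  - exists j; by rewrite /mkseq /= addn0 addn1 E.
have := Hw LS; rewrite /prefix_inf /pref /mkseq /= => -[] H.
by apply: Ne.
Qed.

Fixpoint blk (p : nat) : seq A :=
  match p with
  | 0 => [:: w 0]
  | q.+1 => if w q.+1 == al then [:: al] else rcons (blk q) (w q.+1)
  end.

Lemma blk_al p : w p = al -> blk p = [:: al].
Proof. by case: p => //= q ->; rewrite eqxx. Qed.

Lemma blk_wd p p' : w p = w p' -> blk p = blk p'.
Proof.
elim: p p' => [|q IH] p' E.
  by rewrite (blk_al (esym E)).
case: (eqVneq (w q.+1) al) => Hq.
  by rewrite (blk_al Hq) blk_al // -E.
case: p' E => [|q'] E; first by rewrite E in Hq; rewrite eqxx in Hq.
rewrite /= -E (negbTE Hq); congr rcons.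
apply: IH; apply: pred_uniq => //; exact/eqP.
Qed.

Lemma blk_seg s p : s <= p -> w s = al -> (forall q, s < q <= p -> w q <> al) ->
  blk p = mkseq (fun k => w (s + k)) (p - s).+1.
Proof.
elim: p => [|p IH] Hs Ws G.
  by have -> : s = 0 by lia.
case: (eqVneq s p.+1) => [Es|Ns].
  by subst s; rewrite subnn /= Ws eqxx /mkseq /= addn0 Ws.
have Hp : w p.+1 <> al by apply: G; lia.
have -> : (p.+1 - s).+1 = (p - s).+2 by lia.
rewrite /= mkseqS; case: eqP => // _.
rewrite IH //; [|lia|by move=> q Hq; apply: G; lia].
by congr rcons; congr w; lia.
Qed.

Lemma blk_grow n k : (forall q, n < q <= n + k -> w q <> al) ->
  size (blk (n + k)) = size (blk n) + k.
Proof.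
elim: k => [|k IH] G; first by rewrite !addn0.
rewrite addnS /=; case: eqP => [E|_].
  by exfalso; apply: (G (n + k).+1) => //; lia.
rewrite size_rcons IH; first lia.
by move=> q Hq; apply: G; lia.
Qed.

Lemma al_inf n : exists m, (n < m) && (w m == al).
Proof.
case: (boolP [exists i : 'I_(#|A|.+1), w (n + i.+1) == al]).
  move/existsP=> [i Hi]; exists (n + i.+1); rewrite Hi andbT; lia.
rewrite negb_exists => /forallP H.
have G : forall q, n < q <= n + #|A|.+1 -> w q <> al.
  move=> q Hq E.
  have Hi : q - n - 1 < #|A|.+1 by lia.
  have := H (Ordinal Hi); rewrite /=.
  have -> : n + (q - n - 1).+1 = q by lia.
  by rewrite E eqxx.
pose g (i : 'I_(#|A|.+1)) := w (n + i.+1).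
have inj : injective g.
  move=> i j E; apply: val_inj.
  have := blk_wd E.
  move/(congr1 size).
  rewrite -!addSnnS !blk_grow.
  - by move/addnI.
  - move=> q Hq; apply: G; have := ltn_ord j; lia.
  - move=> q Hq; apply: G; have := ltn_ord i; lia.
have := leq_card g inj; rewrite card_ord; lia.
Qed.

Definition nxt (n : nat) : nat := ex_minn (al_inf n).

Lemma nxtP n : [/\ n < nxt n, w (nxt n) = al &
  forall q, n < q < nxt n -> w q <> al].
Proof.
rewrite /nxt; case: ex_minnP => m /andP [H1 /eqP H2] H3; split => //.
move=> q Hq E; have := H3 q; rewrite E eqxx andbT.
have -> : n < q by lia.
move=> /(_ isT); lia.
Qed.

Fixpoint t (k : nat) : nat := match k with 0 => 0 | k.+1 => nxt (t k) end.

Lemma t_lt k : t k < t k.+1.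
Proof. by have [] := nxtP (t k). Qed.

Lemma t_al k : w (t k) = al.
Proof. case: k => //= k; by have [] := nxtP (t k). Qed.

Lemma t_gap k q : t k < q < t k.+1 -> w q <> al.
Proof. move=> Hq; have [_ _ G] := nxtP (t k); exact: G. Qed.

Lemma t_mono k l : k <= l -> t k <= t l.
Proof.
move=> /subnK <-; elim: (l - k) => [|d IH] //.
rewrite addSn; have := t_lt (d + k); lia.
Qed.

Lemma t_ge k : k <= t k.
Proof. elim: k => // k IH; have := t_lt k; lia. Qed.

Lemma t_uniq k m : t k < m -> w m = al -> (forall q, t k < q < m -> w q <> al) ->
  m = t k.+1.
Proof.
move=> H1 H2 H3.
case: (ltngtP m (t k.+1)) => // C; exfalso.
- by apply: (t_gap (k := k) (q := m)) => //; rewrite H1 C.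
- apply: (H3 (t k.+1)); [by rewrite t_lt C | exact: t_al].
Qed.

Definition w' (n : nat) : A := w (t n.+1).-1.

Definition f (b : A) : seq A :=
  match excluded_middle_informative (exists p, w p = b) with
  | left H => blk (proj1_sig (constructive_indefinite_description _ H))
  | right _ => [:: al; b]
  end.

Lemma f_blk p : f (w p) = blk p.
Proof.
rewrite /f; case: excluded_middle_informative => [H|H].
  case: constructive_indefinite_description => /= p' E; exact: blk_wd.
by exfalso; apply: H; exists p.
Qed.

Lemma f_block m : f (w' m) = mkseq (fun k => w (t m + k)) (t m.+1 - t m).
Proof.
rewrite /w' f_blk (@blk_seg (t m)).
- by congr mkseq; have := t_lt m; lia.
- have := t_lt m; lia.
- exact: t_al.
- move=> q Hq; apply: (t_gap (k := m)); have := t_lt m; lia.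
Qed.

Lemma seg i n : morph_app f (mkseq (fun k => w' (i + k)) n) =
  mkseq (fun k => w (t i + k)) (t (i + n) - t i).
Proof.
elim: n => [|n IH]; first by rewrite addn0 subnn.
rewrite mkseqS /morph_app map_rcons flatten_rcons -/(morph_app f _) IH f_block.
have M1 := t_mono (leq_addr n i).
have M2 := t_lt (i + n).
have -> : t (i + n.+1) - t i = (t (i + n) - t i) + (t (i + n).+1 - t (i + n)).
  by rewrite addnS; lia.
rewrite mkseq_add; congr cat; apply: mkseq_ext => k _; congr w; lia.
Qed.

Lemma f_bLSP : bLSP f.
Proof.
exists al; split; first by rewrite f_blk.
move=> b Nb.
case: (excluded_middle_informative (exists p, w p = b)) => [[p Ep]|H].
  case: p Ep => [|q] Ep; first by exfalso; apply: Nb; rewrite -Ep.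
  exists (w q); rewrite -Ep !f_blk /= Ep.
  by case: eqP.
exists al; rewrite f_blk /= /f.
case: excluded_middle_informative => // H'; by exfalso.
Qed.

Lemma image_w' : image_inf f w' w.
Proof.
split.
- move=> n.
  have E : morph_app f (pref w' n) = mkseq w (t n).
    rewrite /pref (@mkseq_ext _ w' (fun k => w' (0 + k))) //.
    by rewrite seg /= subn0.
  by rewrite /prefix_inf E /pref size_mkseq.
- move=> m; exists m.
  rewrite /pref (@mkseq_ext _ w' (fun k => w' (0 + k))) //.
  by rewrite seg size_mkseq /= subn0 t_ge.
Qed.

Lemma shift a L c : c = t a ->
  (forall k, k <= t (a + L) - t a -> w k = w (c + k)) ->
  forall k, k <= L -> t (a + k) = c + t k.
Proof.
move=> Hc Hw' k; elim: k => [|k IH] Hk; first by rewrite addn0 addn0 Hc.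
have IH' := IH (ltnW Hk).
have Mk := t_mono (leq_add (leqnn a) Hk).
have Lt := t_lt (a + k).
rewrite addnS in Mk *.
have Ck : c <= t (a + k).+1 by lia.
suff : t (a + k).+1 - c = t k.+1 by lia.
apply: t_uniq.
- lia.
- rewrite Hw'; last lia.
  rewrite subnKC //; exact: t_al.
- move=> q Hq; rewrite Hw'; last lia.
  apply: (t_gap (k := a + k)); lia.
Qed.

Lemma LSP_w' : LSP w'.
Proof.
move=> u [x [y [xy [[i Hi] [j Hj]]]]].
rewrite /= mkseq_cons in Hi; case: Hi => Hx Hu.
rewrite /= mkseq_cons in Hj; case: Hj => Hy Hu2.
set L := size u in Hu Hu2 *.
have occ : forall i x, w' (i + 0) = x ->
    mkseq (fun k => w' (i + k.+1)) L = u ->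
    rcons (morph_app f u) al =
      mkseq (fun k => w (t i.+1 + k)) (t (i.+1 + L) - t i.+1).+1 /\
    factor_inf (x :: rcons (morph_app f u) al) w.
  move=> i0 x0 H0 H1.
  have E1 : morph_app f u = mkseq (fun k => w (t i0.+1 + k)) (t (i0.+1 + L) - t i0.+1).
    rewrite -H1 -seg; congr morph_app; apply: mkseq_ext => k _; congr w'; lia.
  have Mo := t_mono (leq_addr L i0.+1).
  have E2 : rcons (morph_app f u) al =
      mkseq (fun k => w (t i0.+1 + k)) (t (i0.+1 + L) - t i0.+1).+1.
    by rewrite mkseqS E1 subnKC // t_al.
  split => //.
  have P0 := t_lt i0.
  exists (t i0.+1).-1.
  have Hsz : size (x0 :: rcons (morph_app f u) al) = (t (i0.+1 + L) - t i0.+1).+2.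
    by rewrite /= size_rcons E1 size_mkseq.
  rewrite Hsz E2 mkseq_cons; congr cons.
    by rewrite addn0 -H0 addn0.
  apply: mkseq_ext => k _; congr w; lia.
have [E2 Fx] := occ i x Hx Hu.
have [_ Fy] := occ j y Hy Hu2.
have Hp := Hw (ex_intro _ x (ex_intro _ y (conj xy (conj Fx Fy)))).
move: Hp; rewrite /prefix_inf E2 size_mkseq /pref => Hp.
have Hs : forall k, k <= t (i.+1 + L) - t i.+1 -> w k = w (t i.+1 + k).
  move=> k Hk; apply: (mkseq_ext_inv Hp); lia.
have Sh := shift (erefl _) Hs.
rewrite /prefix_inf /pref -/L -Hu.
apply: mkseq_ext => k Hk.
rewrite /w'.
have S1 := Sh k.+1 Hk.
rewrite -addSnnS addSn in S1.
have -> : i + k.+1 = i.+1 + k by lia.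
rewrite S1.
have P0 := t_lt k.
have Mo := t_mono (leq_add (leqnn i.+1) Hk).
rewrite addnS S1 in Mo.
have -> : (t i.+1 + t k.+1).-1 = t i.+1 + (t k.+1).-1 by lia.
apply: Hs; lia.
Qed.

End Step.

Lemma step_lemma (A : finType) (w : nat -> A) : LSP w ->
  exists (g : morphism A) (v : infword A), bLSP g /\ LSP v /\ image_inf g v w.
Proof.
move=> Hw; exists (@f A w), (@w' A w Hw); split; [exact: f_bLSP | split].
- exact: LSP_w'.
- exact: image_w'.
Qed.

Theorem proposition1 (A : finType) (w : nat -> A) :
  LSP w -> S_adic (@bLSP A) w.
Proof.
move=> Hw.
have step : forall v : {v : nat -> A | LSP v},
    {p : morphism A * (nat -> A) | bLSP p.1 /\ LSP p.2 /\ image_inf p.1 p.2 (sval v)}.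
  move=> [v Hv]; apply: constructive_indefinite_description.
  have [g [v' [H1 [H2 H3]]]] := step_lemma Hv.
  by exists (g, v').
pose W := fix W n := match n with
  | 0 => exist (fun v => LSP v) w Hw
  | n.+1 => let p := step (W n) in
            exist (fun v => LSP v) (sval p).2 (proj1 (proj2 (svalP p)))
  end.
exists (fun n => (sval (step (W n))).1), (fun n => sval (W n)).
split; [|split].
- move=> n; exact: (proj1 (svalP (step (W n)))).
- by [].
- move=> n /=; exact: (proj2 (proj2 (svalP (step (W n))))).
Qed.
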